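(* Consider the Boston mechanism on a finite set $S$ of students and a finite set $C$ of colleges, as described in the context, and suppose $S=N\sqcup M'$, where students in $N$ (sincere) can only submit their true preference ranking, while students in $M'$ (sophisticated) may submit any ranking. Consider the simultaneous-move game in which each student chooses a submitted ranking from their action set and receives the college assigned by the Boston mechanism, evaluated by their true preferences. Then every sincere student $s\in N$ is assigned the same college (or outside option) in every pure-strategy Nash equilibrium of this game.
   Context: Each student $s$ has a strict true preference order $\succ_s$ over $C\cup\{\emptyset\}$ ($\emptyset$ = unassigned). Each college $c$ has a capacity $q_c\geq 1$ and a strict priority ranking $\succ_c$ over $S$. Each student submits a strict ranking of (a subset of) colleges. The Boston mechanism runs in rounds $k=1,2,\dots$: in round $k$, every student not yet assigned applies to the $k$-th college on their submitted ranking (if any); each college, considering only its round-$k$ applicants, permanently assigns them in order of its priority ranking up to its remaining capacity and rejects the rest; assignments are final. Students never assigned receive $\emptyset$. A pure-strategy Nash equilibrium is a profile of submitted rankings, each in the respective student's action set, such that no student can obtain a strictly better assignment (according to their true preferences) by unilaterally changing to another ranking in their action set. *)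

(* Defs.v *)
From mathcomp Require Import all_boot.
Set Implicit Arguments. Unset Strict Implicit. Unset Printing Implicit Defensive.

Section Boston.
Variables (S C : finType).

(* A strict order on a finite type is encoded by an injective rank function:
   x is strictly better than y iff rank x < rank y. *)
Definition strict_rank (T : finType) (r : T -> nat) : Prop := injective r.

(* Preferences of students over C ∪ {∅} (None = unassigned). *)
Variable pref : S -> option C -> nat.
(* Priority ranking of each college over students (smaller = higher priority). *)
Variable prio : C -> S -> nat.
Variable q : C -> nat.

Definition profile := S -> seq C.

(* k-th college (0-indexed) on a submitted list, if any. *)
Definition kth (l : seq C) (k : nat) : option C := onth l k.

Fixpoint boston_round (L : profile) (k : nat) : S -> option C :=
  match k with
  | 0 => fun _ => None
  | k'.+1 =>
    let A := boston_round L k' in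
    fun s =>
      match A s with
      | Some c => Some c
      | None =>
        match kth (L s) k' with
        | None => None
        | Some c =>
          let better := #|[set t | (A t == None) && (kth (L t) k' == Some c)
                                   && (prio c t < prio c s)]| in
          let remaining := q c - #|[set t | A t == Some c]| in
          if better < remaining then Some c else None
        end
      end
  end.

(* Final outcome: after as many rounds as the longest submitted list
   (no student applies anywhere afterwards). *)
Definition boston (L : profile) : S -> option C :=
  boston_round L (\max_(s : S) size (L s)).

Definition true_ranking (s : S) : seq C :=
  sort (fun a b => pref s (Some a) <= pref s (Some b))
       [seq c <- enum C | pref s (Some c) < pref s None].

Definition action (N : {set S}) (s : S) (l : seq C) : Prop :=
  if s \in N then l = true_ranking s else uniq l.

Definition deviate (L : profile) (s : S) (l : seq C) : profile :=
  fun t => if t == s then l else L t.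

Definition nash (N : {set S}) (L : profile) : Prop :=
  (forall s, action N s (L s)) /\
  forall s l, action N s l ->
    ~ (pref s (boston (deviate L s l) s) < pref s (boston L s)).

End Boston.

(* Main.v *)
Require Import Defs.
From mathcomp Require Import all_boot zify.
Set Implicit Arguments. Unset Strict Implicit. Unset Printing Implicit Defensive.

Lemma rank_count (T : finType) (r : T -> nat) (rinj : injective r) m :
  forall P : {set T},
  #|[set t in P | #|[set u in P | r u < r t]| < m]| = minn #|P| m.
Proof.
move=> P; have [n] := ubnP #|P|; elim: n P => // n IH P.
case: (set_0Vmem P) => [->|[x0 Px0]].
  move=> _; rewrite cards0 min0n; apply/eqP; rewrite cards_eq0; apply/eqP/setP => t; by rewrite !inE.
set x := [arg max_(y > x0 in P) r y].
have Px : x \in P by rewrite /x; case: arg_maxnP.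
have xmax : forall y, y \in P -> r y <= r x by rewrite /x; case: arg_maxnP.
move=> Hn.
have HP : P = x |: (P :\ x) by rewrite setD1K.
have cP' : #|P| = (#|P :\ x|).+1 by rewrite (cardsD1 x P) Px.
have IH' := IH (P :\ x) ltac:(rewrite cP' in Hn; by []).
have Ex : [set u in P | r u < r x] = P :\ x.
  apply/setP => u; rewrite !inE; apply/idP/idP.
    by case/andP => Pu ru; rewrite Pu andbT; apply/eqP => E; rewrite E ltnn in ru.
  case/andP => ux Pu; rewrite Pu /= ltn_neqAle xmax // andbT.
  by apply/eqP => /rinj E; rewrite E eqxx in ux.
have Et : forall t, t \in P :\ x -> [set u in P | r u < r t] = [set u in P :\ x | r u < r t].
  move=> t /setD1P [tx Pt]; apply/setP => u; rewrite !inE.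
  case: (u =P x) => [->|_] //=; rewrite Px /=.
  by apply/negbTE; rewrite -leqNgt xmax.
have -> : [set t in P | #|[set u in P | r u < r t]| < m] =
   [set t in P :\ x | #|[set u in P :\ x | r u < r t]| < m] :|:
   (if #|P :\ x| < m then [set x] else set0).
  apply/setP => t; rewrite !inE.
  case: (t =P x) => [->|tx] /=.
    rewrite Px Ex /=; by case: ifP => _; rewrite inE ?eqxx.
  have -> : (t \in (if #|P :\ x| < m then [set x] else set0)) = false.
    by case: ifP => _; rewrite inE //; apply/eqP.
  rewrite orbF; case Pt: (t \in P) => //=.
  by rewrite Et // !inE Pt andbT; apply/eqP.
rewrite cardsU IH'.
case: ifP => h.
  rewrite cards1 (_ : _ :&: _ = set0) ?cards0.
    rewrite cP'; lia.
  by apply/setP => t; rewrite !inE; case: (t =P x) => [->|]; rewrite ?eqxx ?andbF ?andbT.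
by rewrite cards0 setI0 cards0 cP'; move/negbT: h; lia.
Qed.

Section B.
Variables (S C : finType) (prio : C -> S -> nat) (q : C -> nat).
Hypothesis Hprio : forall c, injective (prio c).
Local Notation A := (boston_round prio q).

Definition cnt (L : profile S C) k c := #|[set t | A L k t == Some c]|.
Definition app (L : profile S C) k c :=
  [set t | (A L k t == None) && (kth (L t) k == Some c)].

Lemma A_S L k s : A L k.+1 s =
  match A L k s with Some c => Some c | None =>
    match kth (L s) k with None => None | Some c =>
      if #|[set t | (A L k t == None) && (kth (L t) k == Some c)
                    && (prio c t < prio c s)]| < q c - cnt L k c
      then Some c else None end end.
Proof. by []. Qed.

Lemma bet_eq L k c s :
  [set t | (A L k t == None) && (kth (L t) k == Some c) && (prio c t < prio c s)]
  = [set u in app L k c | prio c u < prio c s].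
Proof. by apply/setP => t; rewrite !inE. Qed.

Lemma A_Sn L k s c : A L k s = None -> kth (L s) k = Some c ->
  A L k.+1 s = if #|[set u in app L k c | prio c u < prio c s]| < q c - cnt L k c
               then Some c else None.
Proof. by move=> h1 h2; rewrite A_S h1 h2 bet_eq. Qed.

Lemma mono1 L k s c : A L k s = Some c -> A L k.+1 s = Some c.
Proof. by rewrite A_S => ->. Qed.

Lemma mono L k k' s c : k <= k' -> A L k s = Some c -> A L k' s = Some c.
Proof.
move=> hk h; elim: k' hk => [|k' IH]; first by rewrite leqn0 => /eqP <-.
rewrite leq_eqVlt => /orP[/eqP <- //|]; rewrite ltnS => /IH; exact: mono1.
Qed.

Lemma got_kth L k s c : A L k s = None -> A L k.+1 s = Some c -> kth (L s) k = Some c.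
Proof.
rewrite A_S => ->; case: kth => // c'; by case: ifP => // _ [<-].
Qed.

Lemma first L j s c : A L j s = Some c ->
  exists2 k, k < j & (A L k s = None /\ A L k.+1 s = Some c).
Proof.
elim: j => [//|j IH].
case E: (A L j s) => [c'|] h.
  move: (mono1 E); rewrite h => -[hc]; subst c'.
  by case: (IH E) => k hk hh; exists k => //; apply: ltnW.
by exists j.
Qed.

Lemma cnt0 L c : cnt L 0 c = 0.
Proof. by apply/eqP; rewrite cards_eq0; apply/eqP/setP => t; rewrite !inE. Qed.

Lemma cnt_step L k c :
  cnt L k.+1 c = cnt L k c + minn #|app L k c| (q c - cnt L k c).
Proof.
rewrite -(rank_count (@Hprio c)) {1}/cnt.
have -> : [set t | A L k.+1 t == Some c] = [set t | A L k t == Some c] :|: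
   [set t in app L k c | #|[set u in app L k c | prio c u < prio c t]| < q c - cnt L k c].
  apply/setP => t; rewrite !inE.
  case E: (A L k t) => [c'|]; first by rewrite A_S E /= orbF.
  case K: (kth (L t) k) => [c'|]; last by rewrite A_S E K.
  rewrite (A_Sn E K) /=.
  case: (c' =P c) => [<-|nc].
    by case: ifP => _; rewrite eqxx.
  rewrite (_ : (Some c' == Some c) = false) /=; last by apply/eqP => -[].
  by case: (_ < _ - _) => //=; apply/eqP => -[].
rewrite /cnt cardsU (_ : _ :&: _ = set0) ?cards0 ?subn0 //.
apply/setP => t; rewrite !inE; case: (A L k t) => //= a; by rewrite andbF.
Qed.

Lemma cap L k c : cnt L k c <= q c.
Proof.
elim: k => [|k IH]; first by rewrite cnt0.
rewrite cnt_step; lia.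
Qed.

Lemma reject_full L k t c : A L k t = None -> kth (L t) k = Some c ->
  A L k.+1 t = None -> cnt L k.+1 c = q c.
Proof.
move=> h1 h2; rewrite (A_Sn h1 h2); case: ifP => // /negbT; rewrite -leqNgt => hb _.
have ta : t \in app L k c by rewrite inE h1 h2 !eqxx.
have hs : [set u in app L k c | prio c u < prio c t] \subset app L k c :\ t.
  apply/subsetP => u; rewrite !inE => /andP[/andP[-> ->] hu]; rewrite !andbT.
  by apply/eqP => E; rewrite E ltnn in hu.
have hs' := subset_leq_card hs; have hd := cardsD1 t (app L k c); rewrite ta in hd.
rewrite cnt_step; have := cap L k c; lia.
Qed.

Lemma full_noacc L k t c : cnt L k c = q c -> A L k t = None ->
  A L k.+1 t = Some c -> False.
Proof.
move=> hf h1 h2; have h3 := got_kth h1 h2.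
by move: h2; rewrite (A_Sn h1 h3) hf subnn ltn0.
Qed.

Lemma cnt_mono L k k' c : k <= k' -> cnt L k c <= cnt L k' c.
Proof.
move=> hk; apply: subset_leq_card; apply/subsetP => t; rewrite !inE.
by move/eqP/(mono hk)/eqP.
Qed.

Lemma full_stay L k k' c : k <= k' -> cnt L k c = q c -> cnt L k' c = q c.
Proof. move=> hk hf; have := cnt_mono L c hk; have := cap L k' c; lia. Qed.

Lemma acc_rej L k t u c : A L k t = None -> A L k u = None ->
  kth (L t) k = Some c -> kth (L u) k = Some c ->
  A L k.+1 t = Some c -> A L k.+1 u = None -> prio c t < prio c u.
Proof.
move=> ht hu kt ku; rewrite (A_Sn ht kt) (A_Sn hu ku).
case: ifP => // bt _; case: ifP => // /negbT bu _.
rewrite ltnNge; apply/negP => hle; move: bu; rewrite -leqNgt => bu.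
have : #|[set w in app L k c | prio c w < prio c u]| <=
       #|[set w in app L k c | prio c w < prio c t]|.
  apply: subset_leq_card; apply/subsetP => w; rewrite !inE => /andP[-> hw].
  by rewrite (leq_trans hw hle).
lia.
Qed.

Definition KK (L : profile S C) := \max_(s : S) size (L s).

Lemma stab L k s : KK L <= k -> A L k.+1 s = A L k s.
Proof.
move=> hk; rewrite A_S; case: (A L k s) => // .
rewrite /kth onth_default //; apply: leq_trans hk.
by rewrite /KK; exact: leq_bigmax.
Qed.

Lemma stabn L k s : KK L <= k -> A L k s = boston prio q L s.
Proof.
move=> hk; rewrite -(subnKC hk); elim: (k - KK L) => [|n IH]; first by rewrite addn0.
by rewrite addnS stab ?IH // leq_addr.
Qed.

Lemma final_of L k s c : A L k s = Some c -> boston prio q L s = Some c.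
Proof.
move=> h; case: (leqP k (KK L)) => hk.
  exact: (mono hk h).
by rewrite -(stabn s (ltnW hk)).
Qed.

Lemma boston_got L s c : boston prio q L s = Some c ->
  exists k, A L k s = None /\ A L k.+1 s = Some c.
Proof. by move=> /first [k _ h]; exists k. Qed.

Lemma full_final L j c u : cnt L j c = q c -> boston prio q L u = Some c ->
  A L j u = Some c.
Proof.
move=> hf /boston_got [k [h1 h2]].
case: (leqP j k) => hk.
  by case: (full_noacc (full_stay hk hf) h1 h2).
exact: (mono hk h2).
Qed.

Lemma final_cnt L j c : cnt L j c = q c ->
  #|[set t | boston prio q L t == Some c]| = q c.
Proof.
move=> hf; have := full_stay (leq_maxl j (KK L)) hf; rewrite /cnt.
have -> // : [set t | A L (maxn j (KK L)) t == Some c] = [set t | boston prio q L t == Some c].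
by apply/setP => t; rewrite !inE stabn // leq_maxr.
Qed.

Lemma final_cap L c : #|[set t | boston prio q L t == Some c]| <= q c.
Proof. exact: (cap L (KK L) c). Qed.

End B.

Lemma part_sum (T J : finType) (f : T -> J) (P : pred T) (D : {set J}) :
  \sum_(o in D) #|[set u | P u && (f u == o)]| = #|[set u | P u && (f u \in D)]|.
Proof.
rewrite -sum1_card (partition_big f (fun o => o \in D)); last first.
  by move=> i; rewrite inE => /andP[].
apply: eq_bigr => o oD; rewrite -sum1_card; apply: eq_bigl => u; rewrite !inE.
by case: (f u =P o) => [->|]; rewrite ?oD ?andbT ?andbF.
Qed.

Lemma split_card (T J : finType) (f g : T -> J) o :
  #|[set u | f u == o]| = #|[set u | (g u != f u) && (f u == o)]| +
                          #|[set u | (f u == o) && (g u == o)]|.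
Proof.
rewrite -(cardsID [set u | g u == o] [set u | f u == o]) addnC; congr (_ + _).
  apply: eq_card => u; rewrite !inE.
  by case: (f u =P o) => [E|_]; rewrite ?andbF ?andbT // E.
apply: eq_card => u. rewrite !inE. done.
Qed.

Section Nsec.
Variables (S C : finType) (pref : S -> option C -> nat) (prio : C -> S -> nat) (q : C -> nat).
Hypothesis Hpref : forall s, injective (pref s).
Hypothesis Hprio : forall c, injective (prio c).
Variable N : {set S}.
Local Notation A := (boston_round prio q).
Local Notation mu := (boston prio q).

Lemma TR_le s i j a b : i <= j -> kth (true_ranking pref s) i = Some a ->
  kth (true_ranking pref s) j = Some b -> pref s (Some a) <= pref s (Some b).
Proof.
move=> ij ha hb.
have ia : i < size (true_ranking pref s) by rewrite -onthTE /kth in ha *; rewrite ha.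
have jb : j < size (true_ranking pref s) by rewrite -onthTE /kth in hb *; rewrite hb.
rewrite -(@onth_nth _ a a _ _ ha) -(@onth_nth _ a b _ _ hb).
apply: (@sorted_leq_nth _ (fun a b => pref s (Some a) <= pref s (Some b))) => //.
- by move=> x y z; apply: leq_trans.
- by apply: sort_sorted => x y; apply: leq_total.
Qed.

Lemma TR_acc s i a : kth (true_ranking pref s) i = Some a -> pref s (Some a) < pref s None.
Proof.
move=> h; have : a \in true_ranking pref s by apply/onthP; exists i.
by rewrite mem_sort mem_filter => /andP[].
Qed.

Lemma sinc L s : nash pref prio q N L -> s \in N -> L s = true_ranking pref s.
Proof. by case=> h _ sN; have := h s; rewrite /action sN. Qed.

Lemma F3 L s : nash pref prio q N L -> ~ pref s None < pref s (mu L s).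
Proof.
move=> hn; case: (boolP (s \in N)) => sN.
  case E: (mu L s) => [c|]; last by rewrite ltnn.
  case: (boston_got E) => k [h1 h2]; have := got_kth h1 h2.
  rewrite (sinc hn sN) => /TR_acc; lia.
case: hn => _ /(_ s [::]); rewrite /action (negbTE sN) => /(_ isT) h.
have E : mu (deviate L s [::]) s = None.
  rewrite /boston; elim: (\max_(s0 : S) _) => [//|k IH].
  by rewrite A_S IH /deviate eqxx /kth onth0n.
by rewrite E in h.
Qed.

Lemma F2 L m c : nash pref prio q N L -> m \notin N ->
  pref m (Some c) < pref m (mu L m) ->
  cnt prio q L 1 c = q c /\ forall w, A L 1 w = Some c -> prio c w < prio c m.
Proof.
move=> hn mN hc.
pose L' := deviate L m [:: c].
have hd : ~ pref m (mu L' m) < pref m (mu L m).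
  by case: hn => _ /(_ m [:: c]); rewrite /action (negbTE mN); apply.
have n1 : A L' 1 m <> Some c.
  by move=> /(final_of) E; apply: hd; rewrite E.
have k0 : kth (L' m) 0 = Some c by rewrite /L' /deviate eqxx.
move: n1; rewrite (@A_Sn _ _ prio q L' 0 m c) // cnt0 subn0.
case: ifP => // /negbT; rewrite -leqNgt => hq _.
set T' := [set u in app prio q L 0 c | prio c u < prio c m].
have hT : q c <= #|T'|.
  apply: (leq_trans hq); apply: subset_leq_card; apply/subsetP => u; rewrite !inE.
  case/andP => /andP[_ ku] pu; rewrite pu andbT /=.
  move: ku; rewrite /L' /deviate; case: (u =P m) => [E|//]; by rewrite E ltnn in pu.
split.
  rewrite cnt_step // cnt0 subn0 add0n.
  have : #|T'| <= #|app prio q L 0 c|.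
    by apply: subset_leq_card; apply/subsetP => u; rewrite inE => /andP[].
  lia.
move=> w hw.
have kw := got_kth (erefl : A L 0 w = None) hw.
move: hw; rewrite (@A_Sn _ _ prio q L 0 w c) // cnt0 subn0; case: ifP => // hb _.
rewrite ltnNge; apply/negP => hle.
have : #|T'| <= #|[set u in app prio q L 0 c | prio c u < prio c w]|.
  apply: subset_leq_card; apply/subsetP => u; rewrite !inE => /andP[-> hu].
  by rewrite (leq_trans hu hle).
lia.
Qed.

Lemma no_better L1 L2 : nash pref prio q N L1 -> nash pref prio q N L2 ->
  forall s, s \in N -> ~ pref s (mu L1 s) < pref s (mu L2 s).
Proof.
move=> n1 n2 s0 s0N b0.
have betterSome : forall t, pref t (mu L1 t) < pref t (mu L2 t) ->
    exists d, mu L1 t = Some d.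
  move=> t bt; case E: (mu L1 t) => [d|]; first by exists d.
  by have := F3 (s:=t) n2; rewrite E in bt.
have strictpref : forall t x y, x <> y -> ~ pref t x < pref t y -> pref t y < pref t x.
  move=> t x y ne /negP; rewrite -leqNgt => h; rewrite ltn_neqAle h andbT.
  by apply/eqP => /(@Hpref t y x) E; apply: ne.
have ex : exists k, [exists s, [&& s \in N, pref s (mu L1 s) < pref s (mu L2 s),
                      A L1 k s == None & A L1 k.+1 s != None]].
  have [c0 E] := betterSome s0 b0.
  case: (boston_got E) => k [h1 h2]; exists k; apply/existsP; exists s0.
  by rewrite s0N b0 h1 h2.
case: (ex_minnP ex) => k /existsP [s /and4P [sN b /eqP h1 h2]] kmin.
case E2: (A L1 k.+1 s) h2 => [c|] // _.
have m1 : mu L1 s = Some c := final_of E2.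
have l1 := sinc n1 sN; have l2 := sinc n2 sN.
have ks1 : kth (L1 s) k = Some c := got_kth h1 E2.
have ks : kth (true_ranking pref s) k = Some c by rewrite -l1.
have ks2 : kth (L2 s) k = Some c by rewrite l2.
have bZs := b.
rewrite m1 in b.
have a2k : A L2 k s = None.
  case E: (A L2 k s) => [e|] //; exfalso.
  case: (first E) => j jk [j1 j2].
  have kj : kth (true_ranking pref s) j = Some e by rewrite -l2; exact: got_kth j1 j2.
  have := TR_le (ltnW jk) kj ks; rewrite (final_of E) in b; lia.
have a2k1 : A L2 k.+1 s = None.
  have := A_Sn a2k ks2; case: ifP => _ E //.
  by rewrite (final_of E) ltnn in b.
have full2 := reject_full Hprio a2k ks2 a2k1.
pose Y := [set t | (t \notin N) && (pref t (mu L1 t) < pref t (mu L2 t))].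
pose Z := s |: Y.
pose D := [set o | [exists z in Z, mu L1 z == o]].
have bZ : forall z, z \in Z -> pref z (mu L1 z) < pref z (mu L2 z).
  move=> z /setU1P [-> //|]; by rewrite inE => /andP[].
have Key : forall u, mu L2 u \in D -> mu L1 u <> mu L2 u -> u \in Y.
  move=> u; rewrite inE => /existsP [z /andP [zZ /eqP ez]] neq.
  have sophY : u \notin N -> u \notin Y -> forall d, mu L2 u = Some d ->
      forall w, mu L1 w = Some d -> A L1 1 w = Some d /\ prio d w < prio d u.
    move=> uN uY d ed w ew.
    have nb : ~ pref u (mu L1 u) < pref u (mu L2 u).
      by move=> hb; move: uY; rewrite inE uN hb.
    have bb := strictpref u _ _ neq nb; rewrite ed in bb.
    case: (F2 n1 uN bb) => f1 f2.
    have a1 := full_final Hprio f1 ew; split => //; exact: f2.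
  case/setU1P: zZ => [ezs | zY].
  - subst z; rewrite m1 in ez.
    have [j [uj1 uj2]] := boston_got (esym ez).
    have jk : j <= k.
      rewrite leqNgt; apply/negP => kj.
      have a := full_final Hprio full2 (esym ez).
      by move: (mono kj a); rewrite uj1.
    case: (boolP (u \in N)) => uN.
    + exfalso.
      have lu1 := sinc n1 uN; have lu2 := sinc n2 uN.
      have kuj : kth (true_ranking pref u) j = Some c by rewrite -lu2; exact: got_kth uj1 uj2.
      case: (boolP (pref u (mu L1 u) < pref u (mu L2 u))) => bu.
      * have [c' e1] := betterSome u bu.
        have [j' [v1 v2]] := boston_got e1.
        have kj' : k <= j'.
          by apply: kmin; apply/existsP; exists u; rewrite uN bu v1 v2.
        have kuj' : kth (true_ranking pref u) j' = Some c' by rewrite -lu1; exact: got_kth v1 v2.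
        have := TR_le (leq_trans jk kj') kuj kuj'; rewrite e1 -ez in bu; lia.
      * have bb := strictpref u _ _ neq (negP bu); rewrite -ez in bb.
        have a1j : A L1 j u = None.
          case E: (A L1 j u) => [e|] //; exfalso.
          case: (first E) => j'' jj [w1 w2].
          have kw : kth (true_ranking pref u) j'' = Some e by rewrite -lu1; exact: got_kth w1 w2.
          have := TR_le (ltnW jj) kw kuj; rewrite (final_of E) in bb; lia.
        have kuj1 : kth (L1 u) j = Some c by rewrite lu1.
        have a1j1 : A L1 j.+1 u = None.
          have := A_Sn a1j kuj1; case: ifP => _ E //.
          by rewrite (final_of E) ltnn in bb.
        have f1 := reject_full Hprio a1j kuj1 a1j1.
        move: jk; rewrite leq_eqVlt => /orP [/eqP ejk | jlk].
        - subst j.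
          have p1 := acc_rej h1 a1j ks1 kuj1 E2 a1j1.
          have kuj2 : kth (L2 u) k = Some c by rewrite lu2.
          have p2 := acc_rej uj1 a2k kuj2 ks2 uj2 a2k1.
          lia.
        - exact: (full_noacc (full_stay Hprio jlk f1) h1 E2).
    + case: (boolP (u \in Y)) => // uY; exfalso.
      have [a1 p1] := sophY uN uY c (esym ez) s m1.
      have k0 : k = 0.
        case: (posnP k) => // kp; by move: h1; rewrite (mono kp a1).
      subst k.
      move: jk; rewrite leqn0 => /eqP j0; subst j.
      have kuj : kth (L2 u) 0 = Some c := got_kth uj1 uj2.
      have := acc_rej uj1 a2k kuj ks2 uj2 a2k1; lia.
  - have := zY; rewrite inE => /andP [zN bz].
    have [d e1z] := betterSome z bz; rewrite e1z in ez.
    have bz' : pref z (Some d) < pref z (mu L2 z) by rewrite -e1z.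
    case: (F2 n2 zN bz') => f2 g2.
    have a2u := full_final Hprio f2 (esym ez).
    have pu := g2 u a2u.
    case: (boolP (u \in N)) => uN.
    + exfalso.
      have k2u : kth (L2 u) 0 = Some d := got_kth (erefl : A L2 0 u = None) a2u.
      have k1u : kth (L1 u) 0 = Some d by rewrite (sinc n1 uN) -(sinc n2 uN).
      have a1u : A L1 1 u = None.
        have := A_Sn (erefl : A L1 0 u = None) k1u; case: ifP => _ E //.
        by move: neq; rewrite (final_of E) -ez.
      have f1 := reject_full Hprio (erefl : A L1 0 u = None) k1u a1u.
      have a1z := full_final Hprio f1 e1z.
      have kz : kth (L1 z) 0 = Some d := got_kth (erefl : A L1 0 z = None) a1z.
      have := acc_rej (erefl : A L1 0 z = None) (erefl : A L1 0 u = None) kz k1u a1z a1u.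
      lia.
    + case: (boolP (u \in Y)) => // uY; exfalso.
      have [_ p] := sophY uN uY d (esym ez) z e1z; lia.
have Full : forall o, o \in D -> exists d, o = Some d /\
    #|[set u | mu L2 u == Some d]| = q d.
  move=> o; rewrite inE => /existsP [z /andP[zZ /eqP ez]].
  case/setU1P: zZ => [ezs | zY].
  - subst z; exists c; rewrite -ez m1; split => //; exact: final_cnt (@Hprio) _ _ _ full2.
  - have := zY; rewrite inE => /andP [zN bz].
    have [d e1z] := betterSome z bz; exists d; rewrite -ez e1z; split => //.
    have bz' : pref z (Some d) < pref z (mu L2 z) by rewrite -e1z.
    case: (F2 n2 zN bz') => f2 _; exact: final_cnt (@Hprio) _ _ _ f2.
have c1 : #|Z| <= #|[set u | (mu L2 u != mu L1 u) && (mu L1 u \in D)]|.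
  apply: subset_leq_card; apply/subsetP => z zZ; rewrite inE.
  have bz := bZ z zZ.
  apply/andP; split.
    by apply/eqP => E; rewrite E ltnn in bz.
  by rewrite inE; apply/existsP; exists z; rewrite zZ eqxx.
have c2 : #|[set u | (mu L1 u != mu L2 u) && (mu L2 u \in D)]| <= #|Y|.
  apply: subset_leq_card; apply/subsetP => u; rewrite inE => /andP[ne uD].
  by apply: Key => //; apply/eqP.
have hZ : #|Z| = #|Y|.+1.
  by rewrite cardsU1 inE sN.
have eq1 : \sum_(o in D) #|[set u | (mu L2 u != mu L1 u) && (mu L1 u == o)]| =
    #|[set u | (mu L2 u != mu L1 u) && (mu L1 u \in D)]|
  := part_sum (mu L1) (fun u => mu L2 u != mu L1 u) D.
have eq2 : \sum_(o in D) #|[set u | (mu L1 u != mu L2 u) && (mu L2 u == o)]| =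
    #|[set u | (mu L1 u != mu L2 u) && (mu L2 u \in D)]|
  := part_sum (mu L2) (fun u => mu L1 u != mu L2 u) D.
have le : \sum_(o in D) #|[set u | (mu L2 u != mu L1 u) && (mu L1 u == o)]| <=
          \sum_(o in D) #|[set u | (mu L1 u != mu L2 u) && (mu L2 u == o)]|.
  apply: leq_sum => o oD.
  have [d [-> fd]] := Full o oD.
  have s1 := split_card (mu L1) (mu L2) (Some d).
  have s2 := split_card (mu L2) (mu L1) (Some d).
  have cp : #|[set t | mu L1 t == Some d]| <= q d := final_cap q Hprio L1 d.
  have ei : #|[set u | (mu L1 u == Some d) && (mu L2 u == Some d)]| =
            #|[set u | (mu L2 u == Some d) && (mu L1 u == Some d)]|.
    by apply: eq_card => u; rewrite !inE andbC.
  have : #|[set u | mu L2 u != mu L1 u & mu L1 u == Some d]| + #|[set u | mu L1 u == Some d & mu L2 u == Some d]| <= #|[set u | mu L1 u != mu L2 u & mu L2 u == Some d]| + #|[set u | mu L1 u == Some d & mu L2 u == Some d]|.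
    by rewrite -s1 ei -s2 fd; exact: cp.
  by rewrite leq_add2r.
lia.
Qed.

Lemma sincere_same L1 L2 : nash pref prio q N L1 -> nash pref prio q N L2 ->
  forall s, s \in N -> mu L1 s = mu L2 s.
Proof.
move=> n1 n2 s sN; apply/eqP; apply/negPn/negP => /eqP ne.
have := no_better n1 n2 sN; have := no_better n2 n1 sN.
have : pref s (mu L1 s) != pref s (mu L2 s).
  by apply/eqP => /(@Hpref s) E.
lia.
Qed.

End Nsec.

Theorem mainTheorem8 (S C : finType)
    (pref : S -> option C -> nat) (prio : C -> S -> nat) (q : C -> nat)
    (Hpref : forall s, strict_rank (pref s))
    (Hprio : forall c, strict_rank (prio c))
    (Hq : forall c, 0 < q c)
    (N : {set S}) (L1 L2 : profile S C) :
  nash pref prio q N L1 -> nash pref prio q N L2 ->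
  forall s, s \in N -> boston prio q L1 s = boston prio q L2 s.
Proof.
move=> h1 h2 s sN.
exact: (sincere_same (fun s => Hpref s) (fun c => Hprio c) h1 h2 sN).
Qed.
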